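(* For every finite input set $F\subset(K[x_1])[\tilde{\bm{x}}]\setminus K$, every run of the pseudo-eliminant algorithm described in the context terminates after finitely many steps.
   Context: $K$ is a field; $K[x_1,\dots,x_n]$ is regarded as $(K[x_1])[\tilde{\bm{x}}]$, $\tilde{\bm{x}}=(x_2,\dots,x_n)$, with a fixed monomial ordering $\succ$ on monomials in $\tilde{\bm{x}}$. For nonzero $f=\sum c_\alpha\tilde{\bm{x}}^\alpha$ ($c_\alpha\in K[x_1]$), $\operatorname{supp}f$ is the set of $\tilde{\bm{x}}^\alpha$ with $c_\alpha\ne0$, $\operatorname{lm}(f)$ its $\succ$-largest element, $\operatorname{lc}(f)\in K[x_1]$ its coefficient, $\operatorname{lt}(f)=\operatorname{lc}(f)\operatorname{lm}(f)$. Gcds in $K[x_1]$ are monic, $\operatorname{lcm}(a,b)=ab/\gcd(a,b)$. For $f,g\notin K[x_1]$, $S(f,g):=\frac{m\tilde{\bm{x}}^\gamma}{\operatorname{lt}(f)}f-\frac{m\tilde{\bm{x}}^\gamma}{\operatorname{lt}(g)}g$ with $m=\operatorname{lcm}(\operatorname{lc}f,\operatorname{lc}g)$, $\tilde{\bm{x}}^\gamma=\operatorname{lcm}(\operatorname{lm}f,\operatorname{lm}g)$. Pseudo-division of $S$ by a finite set $G\subset(K[x_1])[\tilde{\bm{x}}]\setminus K[x_1]$: starting with $h=S$, while $\operatorname{supp}h\cap\langle\operatorname{lm}(G)\rangle\neq\emptyset$, let $c_\alpha\tilde{\bm{x}}^\alpha$ be the term of $h$ whose monomial is the $\succ$-largest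 in this intersection, choose $b\in G$ with $\operatorname{lm}(b)\mid\tilde{\bm{x}}^\alpha$, put $m=\operatorname{lcm}(c_\alpha,\operatorname{lc}(b))$, $\mu=m/c_\alpha$ and replace $h$ by $\mu h-\frac{m\tilde{\bm{x}}^\alpha}{\operatorname{lt}(b)}b$. The final $h$ is the remainder $r$; the product $\lambda$ of the $\mu$'s is the multiplier. Algorithm. Input: finite $F\subset(K[x_1])[\tilde{\bm{x}}]\setminus K$. Initialize $G:=F\setminus K[x_1]$, $\Lambda:=\emptyset$, $\mathfrak{S}:=\emptyset$, and $f_0:=\gcd(F\cap K[x_1])$ if $F\cap K[x_1]\neq\emptyset$, else $f_0:=0$. Procedure $\mathcal{Q}(f,g)$ for $f\neq g$ in $G$: (i) if $\operatorname{lm}(f),\operatorname{lm}(g)$ are coprime, put $d=\gcd(\operatorname{lc}f,\operatorname{lc}g)$, add $d$ to $\Lambda$ if $d\notin K$, and do not form $S(f,g)$; (ii) else, if some $h\in G\setminus\{f,g\}$ has $\operatorname{lm}(h)\mid\operatorname{lcm}(\operatorname{lm}f,\operatorname{lm}g)$ and the triple $\{f,g,h\}$ has not been used in this way before, put $\lambda=\operatorname{lc}(h)/\gcd(\operatorname{lcm}(\operatorname{lc}f,\operatorname{lc}g),\operatorname{lc}h)$, add $\lambda$ to $\Lambda$ if $\lambda\notin K$, and do not form $S(f,g)$; (iii) otherwise add $S(f,g)$ to $\mathfrak{S}$. Apply $\mathcal{Q}$ to all pairs of $G$. Then, while $\mathfrak{S}\neq\emptyset$: take $S\in\mathfrak{S}$,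 pseudo-divide it by the current $G$ obtaining $\lambda,r$; add $\lambda$ to $\Lambda$ if $\lambda\notin K$; if $r\notin K[x_1]$, add $r$ to $G$ and apply $\mathcal{Q}(f,r)$ for every $f\in G\setminus\{r\}$; if $r\in K[x_1]\setminus K$, set $f_0:=\gcd(r,f_0)$ (with $\gcd(r,0)=r$); if $r=0$ do nothing; then delete $S$ from $\mathfrak{S}$. At the end set $\chi_\varepsilon:=f_0$, $B_\varepsilon:=G$, and for every $f\in B_\varepsilon$, if $d:=\gcd(\operatorname{lc}(f),\chi_\varepsilon)\notin K$, add $d$ to $\Lambda$. Output $\chi_\varepsilon$ (pseudo-eliminant), $B_\varepsilon$ (pseudo-basis) and $\Lambda$ (multiplier set). All choices (order of processing, choice of $h$, of $b$) are arbitrary. *)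

(* Defs.v *)
From HB Require Import structures.
From mathcomp Require Import all_boot all_order all_algebra.
From mathcomp Require Import mpoly.
Set Implicit Arguments. Unset Strict Implicit. Unset Printing Implicit Defensive.
Import Order.TTheory GRing.Theory.
Local Open Scope ring_scope.

(* K[x_1,...,x_{n+1}] is modelled as (K[x_1])[x~] = {mpoly {poly K}[n]},
   x~ = (x_2,...,x_{n+1}) being the n variables of the mpoly. *)

Section PseudoEliminant.
Variable K : fieldType.
Variable n : nat.
(* the fixed monomial ordering (non-strict version of "succ") *)
Variable ord : rel 'X_{1..n}.

Local Notation P := {mpoly {poly K}[n]}.

Definition monomial_order : Prop :=
  [/\ reflexive ord, antisymmetric ord, transitive ord & total ord] /\
  (forall a b c : 'X_{1..n}, ord a b -> ord (a + c)%MM (b + c)%MM) /\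
  (forall m : 'X_{1..n}, ord 0%MM m).

(* the ord-largest element of a sequence of monomials (0 if empty) *)
Definition maxm (s : seq 'X_{1..n}) : 'X_{1..n} :=
  foldr (fun m acc => if ord m acc then acc else m) (head 0%MM s) s.

Definition lm (f : P) : 'X_{1..n} := maxm (msupp f).
Definition lc (f : P) : {poly K} := f@_(lm f).

Definition inK (p : {poly K}) : bool := (size p <= 1)%N.
Definition inKx1 (f : P) : bool := all (fun m => m == 0%MM) (msupp f).
Definition inKmp (f : P) : bool := inKx1 f && inK (f@_0%MM).

(* monic gcd in K[x_1] (gcd(0,0) = 0) *)
Definition mgcd (a b : {poly K}) : {poly K} :=
  (lead_coef (gcdp a b))^-1 *: gcdp a b.
Definition lcmp (a b : {poly K}) : {poly K} := (a * b) %/ mgcd a b.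

Definition Spol (f g : P) : P :=
  let m := lcmp (lc f) (lc g) in
  let ga := mlcm (lm f) (lm g) in
  (m %/ lc f) *: ('X_[(ga - lm f)%MM] * f)
  - (m %/ lc g) *: ('X_[(ga - lm g)%MM] * g).

Definition inLmIdeal (G : seq P) (m : 'X_{1..n}) : bool :=
  has (fun b => lem (lm b) m) G.

Definition reducible (G : seq P) (h : P) : seq 'X_{1..n} :=
  [seq m <- msupp h | inLmIdeal G m].

Definition pdiv_step (G : seq P) (h : P) (lam : {poly K})
    (h' : P) (lam' : {poly K}) : Prop :=
  reducible G h != [::] /\
  let a := maxm (reducible G h) in
  let c := h@_a in
  exists2 b, b \in G &
    lem (lm b) a /\
    let m := lcmp c (lc b) in
    let mu := m %/ c in
    h' = mu *: h - (m %/ lc b) *: ('X_[(a - lm b)%MM] * b) /\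
    lam' = lam * mu.

Definition addL (x : {poly K}) (L : seq {poly K}) : seq {poly K} :=
  if inK x then L else x :: L.

Definition mcoprime (a b : 'X_{1..n}) : bool :=
  [forall i, (a i == 0%N) || (b i == 0%N)].

(* the procedure Q(f,g): (used, Lambda, S) ~> (used', Lambda', S') *)
Inductive Qproc (G : seq P) (f g : P) (used : seq (seq P))
    (Lam : seq {poly K}) (Ss : seq P) :
    seq (seq P) -> seq {poly K} -> seq P -> Prop :=
| Q_coprime : mcoprime (lm f) (lm g) ->
    Qproc G f g used Lam Ss used (addL (mgcd (lc f) (lc g)) Lam) Ss
| Q_triple h : ~~ mcoprime (lm f) (lm g) ->
    h \in G -> h != f -> h != g ->
    lem (lm h) (mlcm (lm f) (lm g)) ->
    ~~ has (fun t => perm_eq t [:: f; g; h]) used ->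
    Qproc G f g used Lam Ss ([:: f; g; h] :: used)
      (addL (lc h %/ mgcd (lcmp (lc f) (lc g)) (lc h)) Lam) Ss
| Q_spoly : ~~ mcoprime (lm f) (lm g) ->
    ~~ has (fun h => [&& h != f, h != g, lem (lm h) (mlcm (lm f) (lm g)) &
                        ~~ has (fun t => perm_eq t [:: f; g; h]) used]) G ->
    Qproc G f g used Lam Ss used Lam (Spol f g :: Ss).

Inductive phase : Type :=
| Main                                   (* applying Q / main while-loop *)
| Div of nat & P & {poly K}              (* pseudo-dividing the i-th element of S:
                                            current h and multiplier *)
| Final of seq P.                        (* final loop over B_eps, elements left *)

Record state : Type := State {
  stG : seq P;               (* G (B_eps in the final phase) *)
  stLam : seq {poly K};
  stS : seq P;
  stf0 : {poly K};           (* f_0 (chi_eps in the final phase) *)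
  stUsed : seq (seq P);      (* triples already used in Q(ii) *)
  stPending : seq (P * P);   (* pairs on which Q still has to be applied *)
  stPhase : phase }.

Fixpoint pairs (s : seq P) : seq (P * P) :=
  if s is x :: t then [seq (x, y) | y <- t] ++ pairs t else [::].

Definition init (F : seq P) : state :=
  let G0 := undup [seq f <- F | ~~ inKx1 f] in
  State G0 [::] [::] (foldr mgcd 0 [seq f@_0%MM | f <- F & inKx1 f])
        [::] (pairs G0) Main.

(* one step of a run of the algorithm; all arbitrary choices are
   nondeterministic *)
Inductive step : state -> state -> Prop :=
| step_Q G Lam Ss f0 used pend fg used' Lam' Ss' :
    fg \in pend ->
    Qproc G fg.1 fg.2 used Lam Ss used' Lam' Ss' ->
    step (State G Lam Ss f0 used pend Main)
         (State G Lam' Ss' f0 used' (rem fg pend) Main)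
| step_take G Lam Ss f0 used i :
    (i < size Ss)%N ->
    step (State G Lam Ss f0 used [::] Main)
         (State G Lam Ss f0 used [::] (Div i (nth 0 Ss i) 1))
| step_div G Lam Ss f0 used i h lam h' lam' :
    pdiv_step G h lam h' lam' ->
    step (State G Lam Ss f0 used [::] (Div i h lam))
         (State G Lam Ss f0 used [::] (Div i h' lam'))
| step_rem_new G Lam Ss f0 used i r lam :
    reducible G r = [::] -> ~~ inKx1 r ->
    step (State G Lam Ss f0 used [::] (Div i r lam))
         (State (rcons G r) (addL lam Lam) (take i Ss ++ drop i.+1 Ss) f0 used
                [seq (f, r) | f <- G & f != r] Main)
| step_rem_x1 G Lam Ss f0 used i r lam :
    reducible G r = [::] -> inKx1 r -> r != 0 ->
    step (State G Lam Ss f0 used [::] (Div i r lam))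
         (State G (addL lam Lam) (take i Ss ++ drop i.+1 Ss)
                (if f0 == 0 then r@_0%MM else mgcd (r@_0%MM) f0)
                used [::] Main)
| step_rem_0 G Lam Ss f0 used i lam :
    reducible G 0 = [::] ->
    step (State G Lam Ss f0 used [::] (Div i 0 lam))
         (State G (addL lam Lam) (take i Ss ++ drop i.+1 Ss) f0 used [::] Main)
| step_end G Lam f0 used :
    step (State G Lam [::] f0 used [::] Main)
         (State G Lam [::] f0 used [::] (Final G))
| step_final G Lam f0 used rest f :
    f \in rest ->
    step (State G Lam [::] f0 used [::] (Final rest))
         (State G (addL (mgcd (lc f) f0) Lam) [::] f0 used [::] (Final (rem f rest))).

Definition is_done (s : state) : Prop :=
  if stPhase s is Final [::] then True else False.

End PseudoEliminant.

(* Main.v *)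
Require Import Defs.
From HB Require Import structures.
From mathcomp Require Import all_boot all_order all_algebra.
From mathcomp Require Import mpoly.
From Stdlib Require Import Relations.
From mathcomp Require Import zify.
From Stdlib Require Import ClassicalEpsilon.
Set Implicit Arguments. Unset Strict Implicit. Unset Printing Implicit Defensive.
Import Order.TTheory GRing.Theory.
Local Open Scope ring_scope.


Lemma classic_min (P : nat -> Prop) :
  (exists k, P k) -> exists k, P k /\ forall m, P m -> (k <= m)%N.
Proof.
move=> [k Pk]; elim/ltn_ind: k Pk => k IH Pk.
case: (classic (exists m, (m < k)%N /\ P m)) => [[m [lt Pm]]|N].
  exact: IH m lt Pm.
exists k; split=> // m Pm; rewrite leqNgt; apply/negP => lt; apply: N; exists m; done.
Qed.

Lemma nat_subseq (g : nat -> nat) : exists phi : nat -> nat,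
  (forall i j, (i < j)%N -> (phi i < phi j)%N) /\
  (forall i j, (i < j)%N -> (g (phi i) <= g (phi j))%N).
Proof.
have H m : exists j, (m < j)%N /\ forall k, (m < k)%N -> (g j <= g k)%N.
  have [v [[j [mj gj]] vmin]] := @classic_min (fun v => exists j, (m < j)%N /\ g j = v)
     (ex_intro _ (g m.+1) (ex_intro _ m.+1 (conj (ltnSn m) erefl))).
  exists j; split=> // k mk; rewrite gj; apply: vmin; exists k; done.
pose nx m := proj1_sig (constructive_indefinite_description _ (H m)).
have nxP m : (m < nx m)%N /\ forall k, (m < k)%N -> (g (nx m) <= g k)%N.
  exact: (proj2_sig (constructive_indefinite_description _ (H m))).
pose phi k := iter k.+1 nx 0%N.
have inc k : (phi k < phi k.+1)%N by rewrite /phi iterS; exact: (nxP _).1.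
have mon k : (g (phi k) <= g (phi k.+1))%N.
  rewrite /phi iterS; apply: (nxP _).2.
  apply: ltn_trans (inc k); rewrite /phi iterS; exact: (nxP _).1.
exists phi; split=> i j; elim: j => // j IH; rewrite ltnS leq_eqVlt => /orP [/eqP ->|/IH H'] //.
- exact: ltn_trans H' (inc j).
- exact: leq_trans H' (mon j).
Qed.

Lemma dickson_gen (T : eqType) (I : seq T) (f : nat -> T -> nat) :
  exists phi : nat -> nat,
  (forall i j, (i < j)%N -> (phi i < phi j)%N) /\
  (forall i j, (i < j)%N -> forall t, t \in I -> (f (phi i) t <= f (phi j) t)%N).
Proof.
elim: I => [|t I [phi [Hphi Hf]]]; first by exists id.
have [psi [Hpsi Hg]] := nat_subseq (fun k => f (phi k) t).
exists (fun k => phi (psi k)); split=> [i j ij|i j ij t']; first exact: Hphi (Hpsi _ _ ij).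
rewrite inE => /orP [/eqP ->|tI]; first exact: Hg.
exact: Hf (Hpsi _ _ ij) _ tI.
Qed.

Lemma dickson n (f : nat -> 'X_{1..n}) : exists i j, (i < j)%N /\ (f i <= f j)%MM.
Proof.
have [phi [Hi H]] := dickson_gen (enum 'I_n) (fun k (t : 'I_n) => f k t).
exists (phi 0%N), (phi 1%N); split; first exact: Hi.
apply/mnm_lepP => i; apply: H => //; by rewrite mem_enum.
Qed.


Section Main.
Variable K : fieldType.
Variable n : nat.
Variable ord : rel 'X_{1..n}.
Hypothesis Hord : monomial_order ord.
Local Notation P := {mpoly {poly K}[n]}.

Let ord_refl : ssrbool.reflexive ord. Proof. by case: Hord => [[]]. Qed.
Let ord_anti : ssrbool.antisymmetric ord. Proof. by case: Hord => [[]]. Qed.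
Let ord_trans : ssrbool.transitive ord. Proof. by case: Hord => [[]]. Qed.
Let ord_total : total ord. Proof. by case: Hord => [[]]. Qed.
Let ord_add a b c : ord a b -> ord (a + c)%MM (b + c)%MM. Proof. by case: Hord => [_ []] H _; apply: H. Qed.
Let ord_0 m : ord 0%MM m. Proof. by case: Hord => [_ []]. Qed.

Lemma foldr_max (a : 'X_{1..n}) (s : seq 'X_{1..n}) :
  let r := foldr (fun m acc => if ord m acc then acc else m) a s in
  r \in a :: s /\ ord a r /\ forall x, x \in s -> ord x r.
Proof.
elim: s => [|m s [IH1 [IH2 IH3]]] /=; first by rewrite inE eqxx.
set r := foldr _ a s in IH1 IH2 IH3 *.
case: ifP => Hm.
  split; first by move: IH1; rewrite !inE => /orP [->|->]; rewrite ?orbT.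
  split=> // x; rewrite inE => /orP [/eqP ->|]//; exact: IH3.
have Hrm : ord r m by move: (ord_total m r); rewrite Hm.
split; first by rewrite !inE eqxx orbT.
split; first exact: ord_trans Hrm.
move=> x; rewrite inE => /orP [/eqP ->|xs]; first exact: ord_refl.
exact: ord_trans (IH3 _ xs) Hrm.
Qed.

Lemma maxm_in s : s != [::] -> maxm ord s \in s.
Proof.
case: s => [//|m s] _; have [H _] := foldr_max m (m :: s).
by rewrite /maxm /=; move: H; rewrite /= inE => /orP [/eqP ->|]; rewrite ?inE ?eqxx.
Qed.

Lemma maxm_max s x : x \in s -> ord x (maxm ord s).
Proof. have [_ [_ H]] := foldr_max (head 0%MM s) s; exact: H. Qed.

Lemma ord_lem a b : (a <= b)%MM -> ord a b.
Proof.
move=> H; rewrite -(submK H) -{1}(add0m a); exact: ord_add.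
Qed.

Lemma no_desc (a : nat -> 'X_{1..n}) :
  (forall k, ord (a k.+1) (a k) && (a k.+1 != a k)) -> False.
Proof.
move=> Ha.
have H i j : (i < j)%N -> ord (a j) (a i) && (a j != a i).
  elim: j => // j IH; rewrite ltnS leq_eqVlt => /orP [/eqP ->|/IH /andP [H1 H2]] //.
  have /andP [H3 H4] := Ha j.
  rewrite (ord_trans H3 H1) /=; apply/eqP => E; rewrite E in H3.
  by move/eqP: H2; apply; apply: ord_anti; rewrite H1.
have [i [j [ij Hl]]] := dickson a.
have /andP [H1 /eqP H2] := H i j ij.
by apply: H2; apply: ord_anti; rewrite H1 ord_lem.
Qed.


Lemma mgcd_dvd (a b : {poly K}) : (mgcd a b %| a) && (mgcd a b %| b).
Proof.
rewrite /mgcd; have [E|nz] := eqVneq (gcdp a b) 0.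
  move/eqP: (E); rewrite gcdp_eq0 => /andP [/eqP -> /eqP ->].
  by rewrite !dvdp0.
rewrite !dvdpZl ?dvdp_gcdl ?dvdp_gcdr //.
by rewrite invr_eq0 lead_coef_eq0.
all: by rewrite invr_eq0 lead_coef_eq0.
Qed.

Lemma lcmp_dvd (a b : {poly K}) : (a %| lcmp a b) && (b %| lcmp a b).
Proof.
have /andP [Ha Hb] := mgcd_dvd a b.
rewrite /lcmp; apply/andP; split.
  by rewrite -divp_mulA // dvdp_mulIl.
by rewrite mulrC -divp_mulA // dvdp_mulIl.
Qed.

Lemma pdiv_dec (G : seq P) (h : P) lam (h' : P) lam' : pdiv_step ord G h lam h' lam' ->
  reducible ord G h' != [::] ->
  ord (maxm ord (reducible ord G h')) (maxm ord (reducible ord G h)) &&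
  (maxm ord (reducible ord G h') != maxm ord (reducible ord G h)).
Proof.
rewrite /pdiv_step; case=> Hne.
set a := maxm ord (reducible ord G h).
case=> b bG [Hle [Eh _]] Hne'.
set a' := maxm ord (reducible ord G h').
set c := h@_a in Eh.
set m := lcmp c (lc ord b) in Eh.
set d := (a - lm ord b)%MM in Eh.
have Ha : a \in reducible ord G h by exact: maxm_in.
have Ha' : a' \in reducible ord G h' by exact: maxm_in.
have [Hcm Hbm] : c %| m /\ lc ord b %| m by have /andP [] := lcmp_dvd c (lc ord b).
have F1 m' : ord a m' -> m' != a -> ('X_[d] * b)@_m' = 0.
  move=> H1 H2; apply/eqP; rewrite mcoeff_eq0; apply/negP => Hin.
  move: Hin; rewrite mulrC (perm_mem (msuppMX b d)).
  case/mapP => m0 Hm0 E.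
  have H3 : ord m' a.
    rewrite E addmC -(submK Hle) -/d [X in ord _ X]addmC; apply: ord_add; exact: maxm_max.
  by move/eqP: H2; apply; apply: ord_anti; rewrite H1 H3.
have F2 : h'@_a = 0.
  have Ea : (d + lm ord b)%MM = a by exact: submK.
  have E1 : ('X_[d] * b)@_a = lc ord b by rewrite -Ea mulrC mcoeffMX.
  rewrite Eh mcoeffB !mcoeffZ E1.
  by rewrite -/c !divpK // subrr.
have [Hsupp' Hid'] : a' \in msupp h' /\ inLmIdeal ord G a' by move: Ha'; rewrite mem_filter => /andP [].
have Hne2 : a' != a by apply/eqP => E; move: Hsupp'; rewrite E mcoeff_msupp F2 eqxx.
rewrite Hne2 andbT; case/orP: (ord_total a' a) => // H.
have F3 : h'@_a' = (m %/ c) * h@_a'.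
  by rewrite Eh mcoeffB !mcoeffZ F1 // mulr0 subr0.
have : a' \in reducible ord G h.
  rewrite mem_filter Hid' /= mcoeff_msupp; apply/eqP => E.
  by move: Hsupp'; rewrite mcoeff_msupp F3 E mulr0 eqxx.
move/maxm_max; rewrite -/a => H'.
by move/eqP: Hne2; case; apply: ord_anti; rewrite H H'.
Qed.

End Main.


Section Main2.
Variable K : fieldType.
Variable n : nat.
Variable ord : rel 'X_{1..n}.
Hypothesis Hord : monomial_order ord.
Local Notation P := {mpoly {poly K}[n]}.

Definition Mz (s : state K n) : nat :=
  match stPhase s with
  | Main => 1 + size (stG s) + 3 * size (stPending s) + 2 * size (stS s)
  | Div _ _ _ => size (stG s) + 3 * size (stPending s) + 2 * size (stS s)
  | Final rest => size rest
  end%N.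

Definition inv1 (s : state K n) : Prop :=
  match stPhase s with Div i _ _ => (i < size (stS s))%N | _ => True end.

Definition am (s : state K n) : 'X_{1..n} :=
  match stPhase s with Div _ h _ => maxm ord (reducible ord (stG s) h) | _ => 0%MM end.

Lemma Qsize (G : seq P) f g used Lam Ss used' Lam' Ss' :
  Qproc ord G f g used Lam Ss used' Lam' Ss' -> (size Ss' <= (size Ss).+1)%N.
Proof. by case=> //= *; rewrite leqW. Qed.

Lemma step_inv s s' : step ord s s' -> inv1 s -> inv1 s'.
Proof. by case=> //=. Qed.

Lemma step_G s s' : step ord s s' -> stG s' = stG s \/
  exists r : P, stG s' = rcons (stG s) r /\
    forall g, g \in stG s -> ~~ (lm ord g <= lm ord r)%MM.
Proof.
case=> /=; try by left.
move=> G Lam Ss f0 used i r lam Hr Hx; right; exists r; split=> // g gG.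
have r0 : r != 0.
  by apply/eqP => E; move: Hx; rewrite E /inKx1 msupp0.
have Hin : lm ord r \in msupp r by apply: maxm_in => //; rewrite msupp_eq0.
have : ~~ inLmIdeal ord G (lm ord r).
  apply/negP => Hi; have : lm ord r \in reducible ord G r by rewrite mem_filter Hi.
  by rewrite Hr.
by move/hasPn; apply.
Qed.

Lemma step_M s s' : step ord s s' -> stG s' = stG s -> inv1 s ->
  (Mz s' < Mz s)%N \/
  (Mz s' = Mz s /\ exists i h lam h' lam', stPhase s = Div i h lam /\
     stPhase s' = Div i h' lam' /\ pdiv_step ord (stG s) h lam h' lam').
Proof.
case; rewrite /Mz /inv1 /=.
- move=> G Lam Ss f0 used pend fg used' Lam' Ss' Hfg HQ _ _; left.
  have := Qsize HQ; rewrite size_rem //; case: pend Hfg => //= x p _; lia.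
- move=> *; left; lia.
- move=> G Lam Ss f0 used i h lam h' lam' Hp _ _; right; split=> //.
  by exists i, h, lam, h', lam'.
- move=> G Lam Ss f0 used i r lam _ _ E; exfalso.
  by move: (congr1 size E); rewrite size_rcons; lia.
- move=> G Lam Ss f0 used i r lam _ _ _ _ Hi; left.
  rewrite size_cat size_take size_drop Hi; lia.
- move=> G Lam Ss f0 used i lam _ _ Hi; left.
  rewrite size_cat size_take size_drop Hi; lia.
- move=> *; left; lia.
- move=> G Lam f0 used rest f Hf _ _; left; rewrite size_rem //.
  by case: rest Hf.
Qed.

Local Open Scope nat_scope.
Lemma part1 (F : seq P) : ~ (exists run : nat -> state K n,
       run 0%N = init F /\ forall k, step ord (run k) (run k.+1)).
Proof.
move=> [run [H0 Hs]].
have Hinv k : inv1 (run k).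
  by elim: k => [|k IH]; [rewrite H0 | exact: step_inv (Hs k) IH].
have HG k := step_G (Hs k).
have Hpre k k' : (k <= k')%N -> exists s, stG (run k') = stG (run k) ++ s.
  elim: k' => [|k' IH].
    by rewrite leqn0 => /eqP ->; exists [::]; rewrite cats0.
  rewrite leq_eqVlt => /orP [/eqP <-|/IH [s Hs']]; first by exists [::]; rewrite cats0.
  case: (HG k') => [->|[r [-> _]]]; first by exists s.
  by exists (rcons s r); rewrite Hs' rcons_cat.
have Hsz k k' : (k <= k')%N -> (size (stG (run k)) <= size (stG (run k')))%N.
  by move/Hpre => [s ->]; rewrite size_cat leq_addr.
have Hnth k1 k2 j : (j < size (stG (run k1)))%N -> (j < size (stG (run k2)))%N ->
    nth 0%R (stG (run k1)) j = nth 0%R (stG (run k2)) j.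
  wlog: k1 k2 / (k1 <= k2)%N.
    move=> W; case/orP: (leq_total k1 k2) => H; first exact: W.
    by move=> H1 H2; symmetry; apply: W.
  by move=> /Hpre [s ->] H1 _; rewrite nth_cat H1.
case: (classic (forall B, exists k, (B < size (stG (run k)))%N)) => [Hunb|Hb].
  set s0 := size (stG (run 0)).
  pose T j := ex_minn (P := fun k => (j + s0 < size (stG (run k)))%N) (Hunb (j + s0)).
  pose f j := lm ord (nth 0%R (stG (run (T j))) (j + s0)).
  have Hf i j : (i < j)%N -> ~~ (f i <= f j)%MM.
    move=> ij; rewrite /f /T.
    case: ex_minnP => ti Pti _.
    case: ex_minnP => t Pt Hmin.
    case: t Pt Hmin => [|t'] Pt Hmin; first by move: Pt; rewrite /= -/s0; lia.
    have Nt' : (size (stG (run t')) <= j + s0)%N.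
      by rewrite leqNgt; apply/negP => /Hmin; rewrite ltnn.
    case: (HG t') => [E|[r [E Hr]]]; first by move: Pt; rewrite E; lia.
    have Esz : size (stG (run t')) = (j + s0)%N by move: Pt; rewrite E size_rcons; lia.
    rewrite E nth_rcons Esz ltnn eqxx.
    have Hi : (i + s0 < size (stG (run t')))%N by rewrite Esz; lia.
    rewrite (Hnth _ t' _ Pti Hi); apply: Hr; exact: mem_nth.
  have [i [j [ij Hl]]] := dickson f.
  by move: (Hf i j ij); rewrite Hl.
have [B HB] : exists B, forall k, (size (stG (run k)) <= B)%N.
  apply: NNPP => N; apply: Hb => B; apply: NNPP => N2; apply: N; exists B => k.
  rewrite leqNgt; apply/negP => lt; apply: N2; exists k; done.
have [v0 [[K0 E0] Hv0]] := @classic_min (fun v => exists k, v = (B - size (stG (run k)))%N)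
   (ex_intro _ _ (ex_intro _ 0%N erefl)).
have HGc k : (K0 <= k)%N -> stG (run k.+1) = stG (run k).
  move=> Hk.
  have H1 : size (stG (run k.+1)) = size (stG (run K0)).
    have := Hv0 _ (ex_intro _ k.+1 erefl); have := HB k.+1;
    have := Hsz _ _ (leq_trans Hk (leqnSn k)); lia.
  have H2 : size (stG (run k)) = size (stG (run K0)).
    have := Hv0 _ (ex_intro _ k erefl); have := HB k; have := Hsz _ _ Hk; lia.
  case: (HG k) => [//|[r [E _]]]; move: H1; rewrite E size_rcons H2; lia.
have [v1 [[K1 [HK1 E1]] Hv1]] := @classic_min (fun v => exists k, (K0 <= k)%N /\ v = Mz (run k))
   (ex_intro _ _ (ex_intro _ K0 (conj (leqnn K0) erefl))).
have Hdec k : (K0 <= k)%N -> (Mz (run k.+1) <= Mz (run k))%N.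
  move=> Hk; case: (step_M (Hs k) (HGc k Hk) (Hinv k)) => [/ltnW //|[-> _]] //.
have HMc j : Mz (run (K1 + j)) = Mz (run K1).
  elim: j => [|j IH]; first by rewrite addn0.
  apply/eqP; rewrite eqn_leq; apply/andP; split.
    by rewrite addnS -IH; apply: Hdec; apply: leq_trans HK1 (leq_addr _ _).
  rewrite -E1; apply: Hv1; exists (K1 + j.+1)%N; split=> //.
  exact: leq_trans HK1 (leq_addr _ _).
have Hdiv j : exists i h lam h' lam', stPhase (run (K1 + j)) = Div i h lam /\
     stPhase (run (K1 + j).+1) = Div i h' lam' /\
     pdiv_step ord (stG (run (K1 + j))) h lam h' lam'.
  have Hk : (K0 <= K1 + j)%N by apply: leq_trans HK1 (leq_addr _ _).
  case: (step_M (Hs (K1 + j)) (HGc _ Hk) (Hinv _)) => [|[_ //]].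
  by rewrite -addnS !HMc ltnn.
apply: (@no_desc _ _ Hord (fun j => am (run (K1 + j)))) => j.
have [i [h [lam [h' [lam' [P1 [P2 P3]]]]]]] := Hdiv j.
have [i2 [h2 [lam2 [h2' [lam2' [Q1 [Q2 Q3]]]]]]] := Hdiv j.+1.
move: Q1 Q3; rewrite addnS P2 => -[_ <- _] Q3.
rewrite (HGc _ (leq_trans HK1 (leq_addr j _))) in Q3.
rewrite /am P2 P1 (HGc _ (leq_trans HK1 (leq_addr j _))).
exact: (pdiv_dec Hord P3 (proj1 Q3)).
Qed.

End Main2.

Local Open Scope ring_scope.


Section Main3.
Variable K : fieldType.
Variable n : nat.
Variable ord : rel 'X_{1..n}.
Local Notation P := {mpoly {poly K}[n]}.

Definition inv2 (s : state K n) : Prop :=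
  match stPhase s with
  | Main => True
  | Div _ _ _ => stPending s = [::]
  | Final _ => stPending s = [::] /\ stS s = [::]
  end.

Lemma step_inv2 s s' : step ord s s' -> inv2 s'.
Proof. by case. Qed.

Lemma Qex (G : seq P) f g used Lam Ss : exists used' Lam' Ss',
  Qproc ord G f g used Lam Ss used' Lam' Ss'.
Proof.
case: (boolP (mcoprime (lm ord f) (lm ord g))) => Hc.
  by do 3 eexists; apply: Q_coprime.
case: (boolP (has (fun h => [&& h != f, h != g, (lm ord h <= mlcm (lm ord f) (lm ord g))%MM &
                        ~~ has (fun t => perm_eq t [:: f; g; h]) used]) G)) => Hh.
  case/hasP: Hh => h hG /and4P [H1 H2 H3 H4].
  by do 3 eexists; apply: Q_triple hG H1 H2 H3 H4.
by do 3 eexists; apply: Q_spoly.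
Qed.

Lemma maxm_in0 (s : seq 'X_{1..n}) : s != [::] -> maxm ord s \in s.
Proof.
case: s => [//|m s] _; rewrite /maxm /=.
suff : forall t, foldr (fun m acc => if ord m acc then acc else m) m t \in m :: t.
  move=> H; case: ifP => _; first by rewrite -[m :: s]/(m :: s); move: (H s); rewrite !inE => /orP [->|->]; rewrite ?orbT.
  by rewrite mem_head.
elim=> [|x t IH] /=; first by rewrite mem_head.
case: ifP => _; first by move: IH; rewrite !inE => /orP [->|->]; rewrite ?orbT.
by rewrite !inE eqxx orbT.
Qed.

Lemma part2 (F : seq P) s : clos_refl_trans _ (step ord) (init F) s ->
     (forall s', ~ step ord s s') -> is_done s.
Proof.
move=> Hrt Hst.
have Hi : inv2 s.
  suff : inv2 (init F) -> inv2 s by apply.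
  elim: Hrt => // [x y /step_inv2 //|x y z _ IH1 _ IH2 H]; exact/IH2/IH1.
clear Hrt; case: s Hst Hi => G Lam Ss f0 used pend [|i h lam|rest] Hst Hi; rewrite /inv2 /= in Hi.
- clear Hi; case: pend Hst => [|fg pend] Hst.
    case: Ss Hst => [|x Ss] Hst; first by exfalso; eapply Hst; eapply step_end.
    by exfalso; eapply Hst; eapply (@step_take _ _ _ _ _ (x :: Ss) _ _ 0%N).
  have [used' [Lam' [Ss' HQ]]] := Qex G fg.1 fg.2 used Lam Ss.
  by exfalso; eapply Hst; eapply step_Q; [exact: mem_head|exact: HQ].
- subst pend; case: (eqVneq (reducible ord G h) [::]) => Hr.
    case: (eqVneq h 0) => [E|h0].
      by subst h; exfalso; eapply Hst; eapply step_rem_0.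
    case: (boolP (inKx1 h)) => Hx.
      by exfalso; eapply Hst; eapply step_rem_x1.
    by exfalso; eapply Hst; eapply step_rem_new.
  set a := maxm ord (reducible ord G h).
  have : a \in reducible ord G h by apply: maxm_in0.
  rewrite mem_filter => /andP [/hasP [b bG Hb] _].
  set c := h@_a.
  set m := lcmp c (lc ord b).
  exfalso; eapply Hst; eapply (@step_div _ _ _ G Lam Ss f0 used i h lam
     ((m %/ c) *: h - (m %/ lc ord b) *: ('X_[(a - lm ord b)%MM] * b)) (lam * (m %/ c))).
  split=> //; exists b => //.
- case: Hi => ? ?; subst; case: rest Hst => [//|f rest] Hst.
  by exfalso; eapply Hst; eapply step_final; exact: mem_head.
Qed.

End Main3.

Unset Implicit Arguments.
Set Strict Implicit.
Theorem lemma3p8 (K : fieldType) (n : nat) (ord : rel 'X_{1..n})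
    (Hord : monomial_order ord) (F : seq {mpoly {poly K}[n]})
    (HF : forall f, f \in F -> ~~ inKmp f) :
  (* no infinite run *)
  ~ (exists run : nat -> state K n,
       run 0%N = init F /\ forall k, step ord (run k) (run k.+1)) /\
  (* every run that cannot continue has reached the end of the algorithm *)
  (forall s, clos_refl_trans _ (step ord) (init F) s ->
     (forall s', ~ step ord s s') -> is_done s).
Proof.
split; [exact: (@part1 K n ord Hord F) | exact: part2].
Qed.
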